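(* Let $\mathcal{H}_A,\mathcal{H}_B$ be finite-dimensional Hilbert spaces and let $W_{AB}\in\mathcal{W}(\mathcal{H}_A\otimes\mathcal{H}_B)$ be a beyond quantum state. Then there exists a semiquantum game $\mathbb{G}_{sq}$ and a choice of local measurements $M_{AA^o}$, $N_{BB^o}$ such that the expected payoff obtained from $W_{AB}$ with these measurements is strictly negative, whereas for every density operator $\rho_{AB}\in\mathcal{D}(\mathcal{H}_A\otimes\mathcal{H}_B)$ and every choice of local measurements (POVMs on $\mathcal{H}_A\otimes\mathcal{H}_{A^o}$ and on $\mathcal{H}_B\otimes\mathcal{H}_{B^o}$ with outcome sets those of the game) the expected payoff is nonnegative. In short: $\mathcal{I}_{\mathbb{G}_{sq}}(W_{AB})<0$ while $\mathcal{I}_{\mathbb{G}_{sq}}(\rho_{AB})\ge 0$ for all $\rho_{AB}\in\mathcal{D}(\mathcal{H}_A\otimes\mathcal{H}_B)$.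
   Context: A POPT state on $\mathcal{H}_A\otimes\mathcal{H}_B$ is a Hermitian unit-trace operator $W$ with $\operatorname{Tr}[W(P\otimes Q)]\ge0$ for all positive semidefinite $P$ on $\mathcal{H}_A$, $Q$ on $\mathcal{H}_B$; the set of these is $\mathcal{W}(\mathcal{H}_A\otimes\mathcal{H}_B)$. $\mathcal{D}(\mathcal{H}_A\otimes\mathcal{H}_B)$ is the set of density operators. A beyond quantum state is an element of $\mathcal{W}\setminus\mathcal{D}$. A (bipartite) semiquantum game $\mathbb{G}_{sq}$ consists of finite-dimensional Hilbert spaces $\mathcal{H}_{A^o},\mathcal{H}_{B^o}$, finite families of pure states $\{\psi^s_{A^o}\}_{s\in\mathcal{S}_A}$ on $\mathcal{H}_{A^o}$ and $\{\psi^t_{B^o}\}_{t\in\mathcal{S}_B}$ on $\mathcal{H}_{B^o}$ (quantum inputs), finite output sets $\mathcal{O}_A,\mathcal{O}_B$, and a real payoff function $\beta:\mathcal{S}_A\times\mathcal{O}_A\times\mathcal{S}_B\times\mathcal{O}_B\to\mathbb{R}$. Given a (POPT or quantum) state $Z_{AB}$ and POVMs $M_{AA^o}=\{\pi^a_{AA^o}\}_{a\in\mathcal{O}_A}$ on $\mathcal{H}_A\otimes\mathcal{H}_{A^o}$ and $N_{BB^o}=\{\pi^b_{BB^o}\}_{b\in\mathcal{O}_B}$ on $\mathcal{H}_B\otimes\mathcal{H}_{B^o}$, the correlation is $p(a,b|\psi^s,\psi^t)=\operatorname{Tr}[(\pi^a_{AA^o}\otimes\pi^b_{BB^o})(\psi^s_{A^o}\otimes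 Z_{AB}\otimes\psi^t_{B^o})]$ (tensor factors reordered appropriately), and the expected payoff is $\mathcal{I}_{\mathbb{G}_{sq}}(Z_{AB})=\sum_{s,a,t,b}\beta(s,a,t,b)\,p(a,b|\psi^s,\psi^t)$. *)

(* Defs.v *)
(* Complex scalars: an arbitrary numClosedFieldType C
   (e.g. the complex numbers R[i]); finite-dimensional Hilbert spaces are C^d,
   operators are 'M[C]_d, tensor products are Kronecker products (tensmx). *)
From HB Require Import structures.
From mathcomp Require Import all_boot all_order all_algebra.
From mathcomp Require Import mxtens.
Set Implicit Arguments. Unset Strict Implicit. Unset Printing Implicit Defensive.
Import Order.TTheory GRing.Theory Num.Theory.
Local Open Scope ring_scope.

Section QDefs.
Variable C : numClosedFieldType.

Definition adjmx {m n : nat} (A : 'M[C]_(m, n)) : 'M[C]_(n, m) :=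
  map_mx Num.conj A^T.

Definition hermitian {n : nat} (A : 'M[C]_n) : Prop := adjmx A = A.

Definition psd {n : nat} (A : 'M[C]_n) : Prop :=
  hermitian A /\ forall v : 'cV[C]_n, 0 <= (adjmx v *m A *m v) 0 0.

Definition density {n : nat} (rho : 'M[C]_n) : Prop :=
  psd rho /\ \tr rho = 1.

Definition popt {dA dB : nat} (W : 'M[C]_(dA * dB)) : Prop :=
  hermitian W /\ \tr W = 1 /\
  forall (P : 'M[C]_dA) (Q : 'M[C]_dB), psd P -> psd Q ->
    0 <= \tr (W *m (P *t Q)).

Definition pure_state {n : nat} (psi : 'M[C]_n) : Prop :=
  exists v : 'cV[C]_n, adjmx v *m v = 1%:M /\ psi = v *m adjmx v.

Definition povm {n k : nat} (pi : 'I_k -> 'M[C]_n) : Prop :=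
  (forall a, psd (pi a)) /\ \sum_(a < k) pi a = 1%:M.

(* psi^s_{A^o} (x) Z_{AB} (x) psi^t_{B^o}, with tensor factors reordered to
   (A (x) A^o) (x) (B (x) B^o). *)
Definition joint_state {dA dB dAo dBo : nat} (psiA : 'M[C]_dAo)
  (Z : 'M[C]_(dA * dB)) (psiB : 'M[C]_dBo) : 'M[C]_((dA * dAo) * (dB * dBo)) :=
  \matrix_(r, c)
    let: (ik, jl) := mxtens_unindex r in
    let: (ik', jl') := mxtens_unindex c in
    let: (i, k) := mxtens_unindex ik in
    let: (j, l) := mxtens_unindex jl in
    let: (i', k') := mxtens_unindex ik' in
    let: (j', l') := mxtens_unindex jl' in
    psiA k k' * Z (mxtens_index (i, j)) (mxtens_index (i', j')) * psiB l l'.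

Definition corr {dA dB dAo dBo : nat} (piA : 'M[C]_(dA * dAo))
  (piB : 'M[C]_(dB * dBo)) (psiA : 'M[C]_dAo) (Z : 'M[C]_(dA * dB))
  (psiB : 'M[C]_dBo) : C :=
  \tr ((piA *t piB) *m joint_state psiA Z psiB).

Record sq_game := SqGame {
  dAo : nat; dBo : nat;
  nSA : nat; nSB : nat; nOA : nat; nOB : nat;
  in_A : 'I_nSA -> 'M[C]_dAo;
  in_B : 'I_nSB -> 'M[C]_dBo;
  beta : 'I_nSA -> 'I_nOA -> 'I_nSB -> 'I_nOB -> C }.

Definition valid_game (G : sq_game) : Prop :=
  (forall s, pure_state (@in_A G s)) /\ (forall t, pure_state (@in_B G t)) /\
  (forall s a t b, @beta G s a t b \is Num.real).

Definition payoff {dA dB : nat} (G : sq_game)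
  (M : 'I_(nOA G) -> 'M[C]_(dA * dAo G)) (N : 'I_(nOB G) -> 'M[C]_(dB * dBo G))
  (Z : 'M[C]_(dA * dB)) : C :=
  \sum_(s < nSA G) \sum_(a < nOA G) \sum_(t < nSB G) \sum_(b < nOB G)
    @beta G s a t b * corr (M a) (N b) (@in_A G s) Z (@in_B G t).

End QDefs.

Arguments payoff {C dA dB} G M N Z.
Arguments valid_game {C} G.

(* Main.v *)
Require Import Defs.
From HB Require Import structures.
From mathcomp Require Import all_boot all_order all_algebra.
From mathcomp Require Import mxtens spectral ring.
From Stdlib Require Import Classical.
Import Order.TTheory GRing.Theory Num.Theory.
Local Open Scope ring_scope.

Module Aux.
Set Implicit Arguments. Unset Strict Implicit. Unset Printing Implicit Defensive.
Section S.
Local Open Scope sesquilinear_scope.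
Variable C : numClosedFieldType.

Definition gram n (A : 'M[C]_n) := exists m (G : 'M[C]_(m, n)),
  forall i j, A i j = \sum_(k < m) (G k i)^* * G k j.

Lemma psd_gram n (A : 'M[C]_n) : psd A -> gram A.
Proof.
move=> [hA pA].
have hA' : A \is hermsymmx.
  apply/is_hermitianmxP; rewrite expr0 scale1r.
  by rewrite -[LHS]hA.
have /orthomx_spectralP := hermitian_normalmx hA'.
set P := spectralmx A; set d := spectral_diag A => eA.
have uP : P \is unitarymx := spectral_unitarymx A.
rewrite invmx_unitary // in eA.
have PP : P *m P^t* = 1%:M by apply/unitarymxP.
have dge0 : forall k, 0 <= d 0 k.
  move=> k; have := pA (P^t* *m delta_mx k (0 : 'I_1)).
  have -> : adjmx (P^t* *m delta_mx k (0 : 'I_1)) = delta_mx 0 k *m P.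
    by rewrite /adjmx trmx_mul map_mxM trmx_delta trmxCK map_delta_mx ?conjC0 ?conjC1.
  rewrite eA !mulmxA -(mulmxA _ P) PP mulmx1 -(mulmxA _ P) PP mulmx1.
  by rewrite -rowE -colE !mxE eqxx mulr1n.
exists n, (diag_mx (\row_k sqrtC (d 0 k)) *m P) => i j.
rewrite eA mul_mx_diag mul_diag_mx !mxE.
apply: eq_bigr => k _.
rewrite !mxE rmorphM /= (geC0_conj (x := sqrtC (d 0 k))) ?sqrtC_ge0 ?dge0 //.
have := sqrtCK (d 0 k); rewrite expr2 => h.
by rewrite mulrACA h mulrCA mulrA.
Qed.

Lemma gram_tens n1 n2 (A : 'M[C]_n1) (B : 'M[C]_n2) :
  gram A -> gram B -> gram (A *t B).
Proof.
move=> [m1 [G eA]] [m2 [H eB]].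
exists (m1 * m2)%N, (G *t H) => i j.
rewrite !mxE eA eB mulr_sum; apply: eq_bigr => x _.
by rewrite !mxE rmorphM /=; ring.
Qed.

Lemma gram_tr n (A B : 'M[C]_n) : gram A -> gram B -> 0 <= \tr (A *m B).
Proof.
move=> [m1 [G eA]] [m2 [H eB]].
have -> : \tr (A *m B) = \sum_(k < m1) \sum_(l < m2)
   (\sum_c G k c * (H l c)^* ) * (\sum_c G k c * (H l c)^* )^*.
  rewrite /mxtrace.
  under eq_bigr => r _ do rewrite mxE.
  under eq_bigr => r _ do under eq_bigr => c _ do rewrite eA eB mulr_suml.
  under eq_bigr => r _ do under eq_bigr => c _ do under eq_bigr => k _ do rewrite mulr_sumr.
  transitivity (\sum_(k < m1) \sum_(l < m2) \sum_c \sum_r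
     G k c * (H l c)^* * ((G k r)^* * H l r)); last first.
    apply: eq_bigr => k _; apply: eq_bigr => l _.
    rewrite rmorph_sum /= mulr_suml; apply: eq_bigr => c _.
    rewrite mulr_sumr; apply: eq_bigr => r _.
    by rewrite rmorphM /= conjCK.
  under eq_bigr => r _ do rewrite exchange_big.
  rewrite exchange_big.
  apply: eq_bigr => k _.
  under eq_bigr => r _ do rewrite exchange_big.
  rewrite exchange_big; apply: eq_bigr => l _.
  rewrite exchange_big; apply: eq_bigr => c _; apply: eq_bigr => r _.
  ring.
apply: sumr_ge0 => k _; apply: sumr_ge0 => l _; exact: mul_conjC_ge0.
Qed.

Lemma sum_tens m n (f : 'I_(m * n) -> C) :
  \sum_(r < m * n) f r = \sum_(a < m) \sum_(b < n) f (mxtens_index (a, b)).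
Proof.
rewrite pair_big /=; apply: reindex => /=.
by exists (@mxtens_unindex m n) => x _; rewrite (mxtens_indexK, mxtens_unindexK) //; case: x.
Qed.

Lemma sum_delta n (a : 'I_n) (g : 'I_n -> C) :
  \sum_(i < n) (a == i)%:R * g i = g a.
Proof.
rewrite (bigD1 a) //= eqxx mul1r big1 ?addr0 // => i /negbTE.
by rewrite eq_sym => ->; rewrite mul0r.
Qed.

Arguments mxtens_unindex : simpl never.
Arguments mxtens_index : simpl never.
Section J.
Variables dA dB dAo dBo : nat.
Definition p1 (r : 'I_((dA * dAo) * (dB * dBo))) := (mxtens_unindex (mxtens_unindex r).1).1.
Definition p2 (r : 'I_((dA * dAo) * (dB * dBo))) := (mxtens_unindex (mxtens_unindex r).1).2.
Definition p3 (r : 'I_((dA * dAo) * (dB * dBo))) := (mxtens_unindex (mxtens_unindex r).2).1.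
Definition p4 (r : 'I_((dA * dAo) * (dB * dBo))) := (mxtens_unindex (mxtens_unindex r).2).2.

Definition Jgen (F : 'I_dAo -> 'I_dBo -> 'I_dAo -> 'I_dBo -> C) (Z : 'M[C]_(dA * dB)) :
  'M[C]_((dA * dAo) * (dB * dBo)) :=
  \matrix_(r, c) (F (p2 r) (p4 r) (p2 c) (p4 c) *
     Z (mxtens_index (p1 r, p3 r)) (mxtens_index (p1 c, p3 c))).

Lemma joint_Jgen (psiA : 'M[C]_dAo) (Z : 'M[C]_(dA * dB)) (psiB : 'M[C]_dBo) :
  joint_state psiA Z psiB = Jgen (fun k l k' l' => psiA k k' * psiB l l') Z.
Proof.
apply/matrixP => r c; rewrite !mxE /p1 /p2 /p3 /p4.
case: (mxtens_unindex r) => ik jl; case: (mxtens_unindex c) => ik' jl' /=.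
case: (mxtens_unindex ik) => i k; case: (mxtens_unindex jl) => j l.
case: (mxtens_unindex ik') => i' k'; case: (mxtens_unindex jl') => j' l' /=.
by rewrite mulrAC.
Qed.

Lemma gram_J (y : 'I_dAo -> 'I_dBo -> C) (Z : 'M[C]_(dA * dB)) :
  gram Z -> gram (Jgen (fun k l k' l' => y k l * (y k' l')^* ) Z).
Proof.
move=> [m [P eZ]]; exists m, (\matrix_(c, r) (P c (mxtens_index (p1 r, p3 r)) * (y (p2 r) (p4 r))^* )).
move=> r c; rewrite !mxE eZ mulr_sumr; apply: eq_bigr => k _.
rewrite !mxE rmorphM /= conjCK.
move: (y (p2 r) (p4 r)) (y (p2 c) (p4 c)) (P k (mxtens_index (p1 r, p3 r))) (P k (mxtens_index (p1 c, p3 c))) => a b e f; ring.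
Qed.

Lemma quantum_nonneg (M : 'M[C]_(dA * dAo)) (N : 'M[C]_(dB * dBo)) (Z : 'M[C]_(dA * dB))
   (y : 'I_dAo -> 'I_dBo -> C) :
  psd M -> psd N -> psd Z ->
  0 <= \tr ((M *t N) *m Jgen (fun k l k' l' => y k l * (y k' l')^* ) Z).
Proof.
move=> pM pN pZ; apply: gram_tr; first exact: gram_tens (psd_gram pM) (psd_gram pN).
exact: gram_J (psd_gram pZ).
Qed.

Lemma Tv_ext X F1 F2 Z : (forall k l k' l', F1 k l k' l' = F2 k l k' l') ->
  \tr (X *m Jgen F1 Z) = \tr (X *m Jgen F2 Z).
Proof.
move=> e; congr (\tr (X *m _)); apply/matrixP => r c; by rewrite !mxE e.
Qed.

Lemma Tv_lin (I : finType) X (g : I -> C) F Z :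
  \sum_(x : I) g x * \tr (X *m Jgen (F x) Z) =
  \tr (X *m Jgen (fun k l k' l' => \sum_(x : I) g x * F x k l k' l') Z).
Proof.
rewrite /mxtrace.
under eq_bigr => x _ do rewrite mulr_sumr.
rewrite exchange_big; apply: eq_bigr => r _.
rewrite !mxE.
under eq_bigr => x _ do rewrite !mxE mulr_sumr.
rewrite exchange_big; apply: eq_bigr => c _.
rewrite !mxE mulr_suml mulr_sumr; apply: eq_bigr => x _.
rewrite mxE; ring.
Qed.
End J.

Definition dl n (r : 'I_(n * n)) : C := ((mxtens_unindex r).1 == (mxtens_unindex r).2)%:R.

Definition phi n : 'M[C]_(n * n) := \matrix_(r, c) (dl r * dl c / n%:R).

Lemma sum_diag n (h : 'I_(n * n) -> C) :
  \sum_x dl x * h x = \sum_(i < n) h (mxtens_index (i, i)).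
Proof.
rewrite sum_tens; apply: eq_bigr => a _.
under eq_bigr => b _ do rewrite /dl mxtens_indexK /=.
exact: sum_delta.
Qed.

Lemma sum_diag2 n m (h : 'I_((n * n) * (m * m)) -> C) :
  \sum_x (dl (mxtens_unindex x).1 * dl (mxtens_unindex x).2) * h x =
  \sum_(i < n) \sum_(j < m) h (mxtens_index (mxtens_index (i, i), mxtens_index (j, j))).
Proof.
rewrite sum_tens.
under eq_bigr => a _ do under eq_bigr => b _ do rewrite mxtens_indexK /= -mulrA.
under eq_bigr => a _ do rewrite -mulr_sumr.
rewrite sum_diag; apply: eq_bigr => i _.
exact: sum_diag.
Qed.

Lemma Tv_phi dA dB (F : 'I_dA -> 'I_dB -> 'I_dA -> 'I_dB -> C) (Z : 'M[C]_(dA * dB)) :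
  \tr ((phi dA *t phi dB) *m Jgen F Z) = (dA%:R * dB%:R)^-1 *
   \sum_(i < dA) \sum_(j < dB) \sum_(i' < dA) \sum_(j' < dB)
      F i' j' i j * Z (mxtens_index (i', j')) (mxtens_index (i, j)).
Proof.
rewrite /mxtrace.
under eq_bigr => r _ do rewrite mxE.
under eq_bigr => r _ do under eq_bigr => c _ do rewrite [(_ *t _) r c]mxE !mxE.
have e : forall (a b c d k x J : C), a * b / k * (c * d / x) * J = a * c * (b * d * ((k * x)^-1 * J)).
  by move=> a b c d k x J; rewrite invfM; ring.
under eq_bigr => r _ do under eq_bigr => c _ do rewrite e.
under eq_bigr => r _ do rewrite -mulr_sumr.
rewrite sum_diag2; rewrite mulr_sumr; apply: eq_bigr => i _.
rewrite mulr_sumr; apply: eq_bigr => j _.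
rewrite sum_diag2 mulr_sumr; apply: eq_bigr => i' _.
rewrite mulr_sumr; apply: eq_bigr => j' _.
by rewrite /p1 /p2 /p3 /p4 !mxtens_indexK.
Qed.

End S.
Arguments dl {C n}. Arguments phi {C}.

Section S.
Local Open Scope sesquilinear_scope.
Variable C : numClosedFieldType.
Arguments mxtens_unindex : simpl never.
Arguments mxtens_index : simpl never.

Lemma adjmx_mul m n p (A : 'M[C]_(m, n)) (B : 'M[C]_(n, p)) :
  adjmx (A *m B) = adjmx B *m adjmx A.
Proof. by rewrite /adjmx trmx_mul map_mxM. Qed.

Lemma adjmxK m n (A : 'M[C]_(m, n)) : adjmx (adjmx A) = A.
Proof. by rewrite /adjmx; apply/matrixP => i j; rewrite !mxE conjCK. Qed.

Lemma psd_gramB m n (B : 'M[C]_(m, n)) : psd (adjmx B *m B).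
Proof.
split; first by rewrite /Defs.hermitian adjmx_mul adjmxK.
move=> v; have -> : adjmx v *m (adjmx B *m B) *m v = adjmx (B *m v) *m (B *m v).
  by rewrite adjmx_mul !mulmxA.
rewrite mxE; apply: sumr_ge0 => k _; rewrite !mxE mulrC; exact: mul_conjC_ge0.
Qed.

Lemma psd_proj n (P : 'M[C]_n) : adjmx P = P -> P *m P = P -> psd P.
Proof. by move=> hP pP; have := psd_gramB P; rewrite hP pP. Qed.

Lemma psd_rank1 n (w : 'cV[C]_n) : psd (w *m adjmx w).
Proof. by have := psd_gramB (adjmx w); rewrite adjmxK. Qed.

Lemma dl_conj n (r : 'I_(n * n)) : (dl r : C)^* = dl r.
Proof. by rewrite /dl conjC_nat. Qed.

Lemma phi_herm n : adjmx (phi n : 'M[C]_(n * n)) = phi n.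
Proof.
apply/matrixP => r c; rewrite !mxE !rmorphM /= fmorphV /= !dl_conj conjC_nat.
by rewrite [dl c * _]mulrC.
Qed.

Lemma phi_idem n : (0 < n)%N -> phi n *m phi n = phi n :> 'M[C]_(n * n).
Proof.
move=> n0; apply/matrixP => r c; rewrite !mxE.
have e : forall m, (phi n r m : C) * phi n m c = dl m * (dl m * (dl r * dl c / n%:R / n%:R)).
  by move=> m; rewrite !mxE; ring.
under eq_bigr => m _ do rewrite e.
rewrite sum_diag.
under eq_bigr => i _ do rewrite /dl mxtens_indexK /= eqxx mul1r.
rewrite sumr_const card_ord -mulr_natr.
have nz : (n%:R : C) != 0 by rewrite pnatr_eq0 -lt0n.
by field.
Qed.

Lemma psd_phi n : (0 < n)%N -> psd (phi n : 'M[C]_(n * n)).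
Proof. by move=> n0; apply: psd_proj; [exact: phi_herm | exact: phi_idem]. Qed.

Lemma psd_1phi n : (0 < n)%N -> psd (1%:M - phi n : 'M[C]_(n * n)).
Proof.
move=> n0; apply: psd_proj.
  apply/matrixP => r c; have := congr1 (fun M : 'M[C]_(n * n) => M r c) (phi_herm n).
  rewrite !mxE /= => <-; rewrite rmorphB /= conjC_nat.
  by rewrite eq_sym.
by rewrite mulmxBl !mulmxBr !mul1mx mulmx1 phi_idem // subrr subr0.
Qed.

Definition n2 d (u : 'I_d -> C) := \sum_x u x * (u x)^*.
Definition wv d (u : 'I_d -> C) (i0 : 'I_d) : 'cV[C]_d :=
  if n2 u == 0 then delta_mx i0 0 else \col_x (u x / sqrtC (n2 u)).
Definition psi d (u : 'I_d -> C) (i0 : 'I_d) : 'M[C]_d := wv u i0 *m adjmx (wv u i0).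

Lemma n2_ge0 d (u : 'I_d -> C) : 0 <= n2 u.
Proof. by apply: sumr_ge0 => x _; exact: mul_conjC_ge0. Qed.

Lemma psi_entry d (u : 'I_d -> C) i0 x x' : psi u i0 x x' = wv u i0 x 0 * (wv u i0 x' 0)^*.
Proof. by rewrite !mxE big_ord1 !mxE. Qed.

Lemma psi_pure d (u : 'I_d -> C) i0 : pure_state (psi u i0).
Proof.
exists (wv u i0); split => //.
apply/matrixP => a b; rewrite !ord1 !mxE /wv.
case: ifP => h.
  rewrite (bigD1 i0) //= big1 ?addr0; first by rewrite !mxE eqxx conjC1 mulr1.
  by move=> k /negbTE nk; rewrite !mxE nk conjC0 mul0r.
set s := sqrtC (n2 u).
have s0 : s != 0 by rewrite sqrtC_eq0 h.
have cs : s^* = s by rewrite geC0_conj // sqrtC_ge0 n2_ge0.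
have ss : s * s = n2 u by rewrite -expr2 sqrtCK.
under eq_bigr => k _ do rewrite !mxE rmorphM /= fmorphV /= cs.
have -> : \sum_k (u k)^* / s * (u k / s) = n2 u / (s * s).
  rewrite /n2 mulr_suml; apply: eq_bigr => k _.
  by rewrite invfM; ring.
by rewrite ss divff // h.
Qed.

Lemma decomp_u d (u : 'I_d -> C) i0 x x' : u x * (u x')^* = n2 u * psi u i0 x x'.
Proof.
rewrite psi_entry /wv; case: ifP => h.
  have z : forall y, u y = 0.
    have hs : \sum_x u x * (u x)^* = 0 by exact/eqP.
    move=> y; apply/eqP; rewrite -mul_conjC_eq0; apply/eqP.
    by apply: (psumr_eq0P (P := fun _ => true) (fun x _ => mul_conjC_ge0 (u x)) hs).
  rewrite (eqP h) !z. by rewrite !mul0r.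
set s := sqrtC (n2 u).
have s0 : s != 0 by rewrite sqrtC_eq0 h.
have cs : s^* = s by rewrite geC0_conj // sqrtC_ge0 n2_ge0.
have ss : s * s = n2 u by rewrite -expr2 sqrtCK.
rewrite !mxE rmorphM /= fmorphV /= cs -ss.
by field.
Qed.

Lemma psd_psiT d (u : 'I_d -> C) i0 : psd (psi u i0)^T.
Proof.
have -> : (psi u i0)^T = map_mx Num.conj (wv u i0) *m adjmx (map_mx Num.conj (wv u i0)).
  apply/matrixP => a b; rewrite !mxE big_ord1 !mxE big_ord1 !mxE conjCK.
  by rewrite mulrC.
exact: psd_rank1.
Qed.

End S.
Arguments n2 {C d}. Arguments wv {C d}. Arguments psi {C d}.

Section S.
Variable C : numClosedFieldType.
Arguments mxtens_unindex : simpl never.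
Arguments mxtens_index : simpl never.

Definition uvec d (i k : 'I_d) (p : 'I_4) : 'I_d -> C :=
  fun x => (x == i)%:R + 'i ^+ p * (x == k)%:R.
Definition cf d (i k : 'I_d) (p : 'I_4) : C := 'i ^+ p * n2 (uvec i k p) / 4%:R.

Lemma polar d (i k x x' : 'I_d) :
  \sum_(p < 4) cf i k p * psi (uvec i k p) i x x' = (x == i)%:R * (x' == k)%:R.
Proof.
have e : forall p, cf i k p * psi (uvec i k p) i x x' =
    'i ^+ p / 4%:R * (uvec i k p x * (uvec i k p x')^*).
  by move=> p; rewrite (decomp_u _ i) /cf; ring.
under eq_bigr do rewrite e.
rewrite !big_ord_recr big_ord0 /= /uvec.
rewrite !rmorphD !rmorphM /= !conjC_nat !rmorphXn /= conjCi.
have hi : ('i : C) ^+ 2 = -1 := sqrCi C.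
have h4 : (4%:R : C) != 0 by rewrite pnatr_eq0.

by field: hi.
Qed.

Definition si d (s : 'I_((d * d) * 4)) : 'I_d := (mxtens_unindex (mxtens_unindex s).1).1.
Definition sk d (s : 'I_((d * d) * 4)) : 'I_d := (mxtens_unindex (mxtens_unindex s).1).2.
Definition sp d (s : 'I_((d * d) * 4)) : 'I_4 := (mxtens_unindex s).2.
Definition inS d (s : 'I_((d * d) * 4)) : 'M[C]_d := psi (uvec (si s) (sk s) (sp s)) (si s).
Definition cS d (s : 'I_((d * d) * 4)) : C := cf (si s) (sk s) (sp s).

Lemma sum_S d (g : 'I_((d * d) * 4) -> C) :
  \sum_s g s = \sum_(i < d) \sum_(k < d) \sum_(p < 4) g (mxtens_index (mxtens_index (i, k), p)).
Proof. by rewrite sum_tens sum_tens. Qed.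

Lemma polarS d (x x' : 'I_d) (G : 'I_d -> 'I_d -> C) :
  \sum_s cS s * inS s x x' * G (si s) (sk s) = G x x'.
Proof.
rewrite sum_S.
under eq_bigr => i _ do under eq_bigr => k _ do under eq_bigr => p _ do
  rewrite /cS /inS /si /sk /sp !mxtens_indexK /=.
under eq_bigr => i _ do under eq_bigr => k _ do
  rewrite -mulr_suml polar -mulrA.
under eq_bigr => i _ do rewrite -mulr_sumr.
rewrite sum_delta.
exact: sum_delta.
Qed.

Definition gam dA dB (y : 'I_dA -> 'I_dB -> C) (s : 'I_((dA * dA) * 4)) (t : 'I_((dB * dB) * 4)) : C :=
  cS s * cS t * y (si s) (si t) * (y (sk s) (sk t))^*.

Lemma decomp_full dA dB (y : 'I_dA -> 'I_dB -> C) a b a' b' :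
  y a b * (y a' b')^* = \sum_s \sum_t gam y s t * (inS s a a' * inS t b b').
Proof.
symmetry.
have inner : forall s, \sum_t gam y s t * (inS s a a' * inS t b b') =
    cS s * inS s a a' * (y (si s) b * (y (sk s) b')^* ).
  move=> s; rewrite -(polarS b b' (fun j l => y (si s) j * (y (sk s) l)^* )) mulr_sumr.
  by apply: eq_bigr => t _; rewrite /gam; ring.
under eq_bigr do rewrite inner.
exact: (polarS a a' (fun i k => y i b * (y k b')^* )).
Qed.

Definition mygame dA dB (y : 'I_dA -> 'I_dB -> C) : sq_game C :=
  @SqGame C dA dB ((dA * dA) * 4) ((dB * dB) * 4) 2 2 (@inS dA) (@inS dB)
    (fun s a t b => if (a == ord0) && (b == ord0) then 'Re (gam y s t) else 0).

Lemma payoff_my dA dB (y : 'I_dA -> 'I_dB -> C) (M : 'I_2 -> 'M[C]_(dA * dA)) (N : 'I_2 -> 'M[C]_(dB * dB)) (Z : 'M[C]_(dA * dB)) :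
  payoff (mygame y) M N Z = \sum_s \sum_t 'Re (gam y s t) *
    \tr ((M ord0 *t N ord0) *m Jgen (fun k l k' l' => inS s k k' * inS t l l') Z).
Proof.
rewrite /payoff /=; apply: eq_bigr => s _.
rewrite big_ord_recl big_ord1 /=.
rewrite [X in _ + X]big1 ?addr0; last by move=> t _; rewrite big1 // => b _; rewrite mul0r.
apply: eq_bigr => t _.
rewrite big_ord_recl big_ord1 /= mul0r addr0.
by rewrite /corr joint_Jgen.
Qed.
End S.
Arguments uvec {C d}. Arguments cf {C d}. Arguments inS {C d}. Arguments cS {C d}. Arguments gam {C dA dB}. Arguments mygame {C dA dB}.

Section S.
Variable C : numClosedFieldType.
Arguments mxtens_unindex : simpl never.
Arguments mxtens_index : simpl never.

Lemma assemble dA dB (y : 'I_dA -> 'I_dB -> C) (X : 'M[C]_((dA * dA) * (dB * dB)))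
   (Z : 'M[C]_(dA * dB)) :
  (forall s t, \tr (X *m Jgen (fun k l k' l' => inS s k k' * inS t l l') Z) \is Num.real) ->
  \sum_s \sum_t 'Re (gam y s t) * \tr (X *m Jgen (fun k l k' l' => inS s k k' * inS t l l') Z)
  = 'Re (\tr (X *m Jgen (fun k l k' l' => y k l * (y k' l')^* ) Z)).
Proof.
move=> hr.
under eq_bigr => s _ do under eq_bigr => t _ do rewrite -(ReMr (hr s t)).
under eq_bigr => s _ do rewrite -raddf_sum.
rewrite -raddf_sum; congr ('Re _).
rewrite pair_big /= Tv_lin; apply: Tv_ext => k l k' l'.
by rewrite decomp_full pair_big.
Qed.

Lemma swap4 a b (f : 'I_a -> 'I_b -> 'I_a -> 'I_b -> C) :
  \sum_i \sum_j \sum_i' \sum_j' f i j i' j' = \sum_i' \sum_j' \sum_i \sum_j f i j i' j'.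
Proof.
under eq_bigr => i _ do rewrite exchange_big.
rewrite exchange_big.
under eq_bigr => i' _ do under eq_bigr => i _ do rewrite exchange_big.
by under eq_bigr => i' _ do rewrite exchange_big.
Qed.

Lemma tr_WPQ dA dB (W : 'M[C]_(dA * dB)) (P : 'M[C]_dA) (Q : 'M[C]_dB) :
  \tr (W *m (P^T *t Q^T)) = \sum_(i < dA) \sum_(j < dB) \sum_(i' < dA) \sum_(j' < dB)
    P i' i * Q j' j * W (mxtens_index (i', j')) (mxtens_index (i, j)).
Proof.
rewrite swap4 /mxtrace sum_tens; apply: eq_bigr => i' _; apply: eq_bigr => j' _.
rewrite mxE sum_tens; apply: eq_bigr => i _; apply: eq_bigr => j _.
by rewrite tensmxE !mxE; ring.
Qed.

Lemma quad_sum dA dB (W : 'M[C]_(dA * dB)) (x : 'cV[C]_(dA * dB)) :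
  (adjmx x *m W *m x) 0 0 = \sum_(i < dA) \sum_(j < dB) \sum_(i' < dA) \sum_(j' < dB)
    (x (mxtens_index (i', j')) 0)^* * x (mxtens_index (i, j)) 0 *
      W (mxtens_index (i', j')) (mxtens_index (i, j)).
Proof.
rewrite mxE sum_tens; apply: eq_bigr => i _; apply: eq_bigr => j _.
rewrite mxE mulr_suml sum_tens; apply: eq_bigr => i' _; apply: eq_bigr => j' _.
by rewrite !mxE; ring.
Qed.

End S.

End Aux.
Import Aux.

Theorem theorem1 (C : numClosedFieldType) (dA dB : nat) (W : 'M[C]_(dA * dB)) :
  popt W -> ~ density W ->
  exists (G : sq_game C),
    valid_game G /\
    exists (M0 : 'I_(nOA G) -> 'M[C]_(dA * dAo G))
           (N0 : 'I_(nOB G) -> 'M[C]_(dB * dBo G)),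
      povm M0 /\ povm N0 /\ payoff G M0 N0 W < 0 /\
      forall (rho : 'M[C]_(dA * dB))
             (M : 'I_(nOA G) -> 'M[C]_(dA * dAo G))
             (N : 'I_(nOB G) -> 'M[C]_(dB * dBo G)),
        density rho -> povm M -> povm N -> 0 <= payoff G M N rho.
Proof.
move=> [hW [trW pW]] nd.
have n0 : (0 < dA * dB)%N.
  rewrite lt0n; apply/negP => /eqP e.
  move: trW; rewrite /mxtrace big1 => [/esym/eqP|i]; first by rewrite oner_eq0.
  by move=> _; exfalso; have := ltn_ord i; move: (nat_of_ord i) => k; rewrite e.
have [dA0 dB0] : (0 < dA)%N /\ (0 < dB)%N by move: n0; rewrite muln_gt0 => /andP.
have : ~ (forall v : 'cV[C]_(dA * dB), 0 <= (adjmx v *m W *m v) 0 0).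
  by move=> h; apply: nd; split => //; split.
move=> /not_all_ex_not [x hx].
set q := (adjmx x *m W *m x) 0 0 in hx.
have qr : q \is Num.real.
  apply/CrealP; rewrite /q.
  have -> : ((adjmx x *m W *m x) 0 0)^* = (adjmx (adjmx x *m W *m x)) 0 0 by rewrite !mxE.
  by rewrite !adjmx_mul adjmxK hW mulmxA.
have qn : q < 0 by rewrite real_ltNge ?real0 //; apply/negP.
pose y := fun (a : 'I_dA) (b : 'I_dB) => (x (mxtens_index (a, b)) 0)^*.
exists (mygame y); split.
  split; first by move=> s; exact: psi_pure.
  split; first by move=> t; exact: psi_pure.
  by move=> s a t b /=; case: ifP => _; [exact: Creal_Re | exact: real0].
exists (fun a : 'I_2 => if a == ord0 then phi dA else 1%:M - phi dA).
exists (fun b : 'I_2 => if b == ord0 then phi dB else 1%:M - phi dB).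
split.
  split; first by move=> a; case: ifP => _; [exact: psd_phi | exact: psd_1phi].
  by rewrite big_ord_recl big_ord1 /= addrC subrK.
split.
  split; first by move=> a; case: ifP => _; [exact: psd_phi | exact: psd_1phi].
  by rewrite big_ord_recl big_ord1 /= addrC subrK.
split.
  rewrite payoff_my /= assemble; last first.
    move=> s t; rewrite Tv_phi; apply: ger0_real; apply: mulr_ge0.
      by rewrite invr_ge0 mulr_ge0 ?ler0n.
    rewrite -tr_WPQ; apply: pW; exact: psd_psiT.
  rewrite Tv_phi.
  have -> : \sum_(i < dA) \sum_(j < dB) \sum_(i' < dA) \sum_(j' < dB)
      y i' j' * (y i j)^* * W (mxtens_index (i', j')) (mxtens_index (i, j)) = q.
    rewrite /q quad_sum; apply: eq_bigr => i _; apply: eq_bigr => j _.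
    apply: eq_bigr => i' _; apply: eq_bigr => j' _.
    by rewrite /y conjCK.
  have hr : (dA%:R * dB%:R)^-1 * q \is Num.real.
    by rewrite realM // ger0_real // invr_ge0 mulr_ge0 ?ler0n.
  have /Creal_ReP -> := hr.
  by rewrite pmulr_rlt0 // invr_gt0 mulr_gt0 ?ltr0n.
move=> rho M N [prho _] [pM _] [pN _].
rewrite payoff_my assemble.
  have h := quantum_nonneg y (pM ord0) (pN ord0) prho.
  by have /Creal_ReP -> := ger0_real h.
move=> s t.
pose Y := fun (k : 'I_dA) (l : 'I_dB) =>
  wv (uvec (C:=C) (si s) (sk s) (sp s)) (si s) k 0 * wv (uvec (C:=C) (si t) (sk t) (sp t)) (si t) l 0.
have e : forall k l k' l', inS s k k' * inS t l l' = Y k l * (Y k' l')^*.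
  by move=> k l k' l'; rewrite /inS !psi_entry /Y rmorphM; ring.
rewrite (Tv_ext _ _ e); apply: ger0_real.
exact: quantum_nonneg Y (pM ord0) (pN ord0) prho.
Qed.
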